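(* Let $k,n$ be integers with $n\geq 2$ and $k\geq 3$, and let $c$ be an exact $k$-coloring of $\mathcal{B}_n$. Then $\mathcal{B}_n$ contains no rainbow induced copy of $\mathcal{C}_3$ if and only if $c(\emptyset)=c([n])$ and, for any two sets $X,Y$ with $\emptyset\subsetneq X,Y\subsetneq[n]$ such that $c(X),c(Y),c(\emptyset)$ are pairwise distinct, $X$ and $Y$ are incomparable.
   Context: $\mathcal{B}_n$ denotes the Boolean lattice of all subsets of $[n]$ ordered by inclusion. An exact $k$-coloring of $\mathcal{B}_n$ is a map from $\mathcal{B}_n$ to $[k]$ that is surjective. A rainbow induced copy of $\mathcal{C}_3$ is a chain $X\subsetneq Y\subsetneq Z$ in $\mathcal{B}_n$ with $c(X),c(Y),c(Z)$ pairwise distinct. *)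

(* Defs.v *)
From mathcomp Require Import all_boot.
Set Implicit Arguments. Unset Strict Implicit. Unset Printing Implicit Defensive.

(* B_n = {set 'I_n} (subsets of [n]) ordered by inclusion; colors [k] = 'I_k. *)

Definition exact_coloring (n k : nat) (c : {set 'I_n} -> 'I_k) : Prop :=
  forall i : 'I_k, exists X : {set 'I_n}, c X = i.

(* rainbow induced copy of C_3: chain X < Y < Z with pairwise distinct colors *)
Definition rainbow_C3 (n k : nat) (c : {set 'I_n} -> 'I_k) (X Y Z : {set 'I_n}) : Prop :=
  [/\ X \proper Y, Y \proper Z, c X != c Y, c Y != c Z & c X != c Z].

Definition has_rainbow_C3 (n k : nat) (c : {set 'I_n} -> 'I_k) : Prop :=
  exists X Y Z, rainbow_C3 c X Y Z.

Definition incomparable (n : nat) (X Y : {set 'I_n}) : Prop :=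
  ~~ (X \subset Y) /\ ~~ (Y \subset X).

(* Main.v *)
Require Import Defs.
From mathcomp Require Import all_boot.
From mathcomp Require Import zify.

Theorem theorem2p1 (n k : nat) (c : {set 'I_n} -> 'I_k) :
  2 <= n -> 3 <= k -> exact_coloring c ->
  (~ has_rainbow_C3 c <->
   (c set0 = c setT /\
    forall X Y : {set 'I_n},
      set0 \proper X -> X \proper setT ->
      set0 \proper Y -> Y \proper setT ->
      c X != c Y -> c X != c set0 -> c Y != c set0 ->
      incomparable X Y)).
Proof.
move=> n2 k3 surj; split.
- move=> norb.
  have H0T : c set0 = c setT.
    apply/eqP; apply/negPn/negP => neq.
    have [d /andP [da db]] : exists d, (d != c set0) && (d != c setT).
      case: (boolP [exists d, (d != c set0) && (d != c setT)]) => [/existsP //|/existsPn H]; exfalso.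
      have: [set: 'I_k] \subset [set c set0; c setT].
        apply/subsetP => i _; have := H i; rewrite negb_and !negbK !inE.
        by case/orP => ->; rewrite ?orbT.
      move/subset_leq_card; rewrite cardsT card_ord cards2 => hk.
      by move: hk k3; case: (c set0 != c setT) => /= hk k3'; lia.
    have [W hW] := surj d.
    apply: norb; exists set0, W, setT; split.
    + rewrite proper0; apply/eqP => W0; by rewrite -hW W0 eqxx in da.
    + rewrite properT; apply/eqP => W0; by rewrite -hW W0 eqxx in db.
    + by rewrite hW eq_sym.
    + by rewrite hW.
    + exact: neq.
  split => // X Y X0 XT Y0 YT cXY cX0 cY0.
  have key : forall A B : {set 'I_n}, set0 \proper A -> B \proper setT -> c A != c B ->
      c A != c set0 -> c B != c set0 -> ~~ (A \subset B).
    move=> A B A0 BT cAB cA0 cB0; apply/negP => AB; apply: norb.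
    exists set0, A, B; split => //.
    + rewrite properEneq AB andbT; apply/eqP => E; by rewrite E eqxx in cAB.
    + by rewrite eq_sym.
    + by rewrite eq_sym.
  split; apply: key => //; by rewrite eq_sym.
- case=> H0T Hinc [X [Y [Z [XY YZ cXY cYZ cXZ]]]].
  have contra : forall A B : {set 'I_n}, set0 \proper A -> A \proper setT -> set0 \proper B ->
      B \proper setT -> A \proper B -> c A != c B -> c A != c set0 ->
      c B != c set0 -> False.
    move=> A B h1 h2 h3 h4 AB h5 h6 h7.
    have [] := Hinc A B h1 h2 h3 h4 h5 h6 h7; by rewrite (proper_sub AB).
  have XZ : X \proper Z := proper_trans XY YZ.
  have Y0 : set0 \proper Y := sub_proper_trans (sub0set X) XY.
  have Z0 : set0 \proper Z := sub_proper_trans (sub0set Y) YZ.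
  have YT : Y \proper setT := proper_sub_trans YZ (subsetT Z).
  have XT : X \proper setT := proper_sub_trans XZ (subsetT Z).
  case: (eqVneq X set0) => [X0|X0].
    subst X.
    have ZT : Z \proper setT.
      rewrite properT; apply/eqP => ZT; by rewrite ZT -H0T eqxx in cXZ.
    apply: (contra Y Z) => //; by rewrite eq_sym.
  have X0' : set0 \proper X by rewrite proper0.
  case: (eqVneq Z setT) => [ZT|ZT].
    subst Z; apply: (contra X Y) => //; by rewrite H0T.
  have ZT' : Z \proper setT by rewrite properT.
  case: (eqVneq (c X) (c set0)) => [e|e].
    apply: (contra Y Z) => //; rewrite -e //; by rewrite eq_sym.
  case: (eqVneq (c Y) (c set0)) => [e'|e'].
    apply: (contra X Z) => //; rewrite -e' //; by rewrite eq_sym.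
  by apply: (contra X Y).
Qed.
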